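(* Let $n\ge1$, let $M_1,\dots,M_n\ge0$ be integers, let $\sigma,\tau$ be permutations of $\{1,\dots,n\}$, and let $a,b,c,d,q$ be generic. For integers $0\le k_i\le M_i$ and $0\le l\le M_1+\dots+M_n$, $$R^l_{k_1+\dots+k_n}(a,b,c,d;M_1+\dots+M_n;q)=\sum_{\substack{m_1+\dots+m_n=l\\0\le m_i\le M_i}}\prod_{i=1}^n R_{k_i}^{m_i}\big(aq^{|k|_i^\sigma},\,bq^{|M-k|_i^\tau},\,cq^{|m|_i^{\mathrm{id}}},\,dq^{|M-m|_i^{\mathrm{id}}};M_i;q\big).$$
   Context: For a multi-index $v=(v_1,\dots,v_n)$ and a permutation $\sigma$, $|v|_i^\sigma=\sum_{\{j:\,\sigma(j)<\sigma(i)\}}v_j$ (so $|v|_i^{\mathrm{id}}=v_1+\dots+v_{i-1}$); $M-k$ denotes $(M_1-k_1,\dots,M_n-k_n)$. $h_k(x;a)=\prod_{j=0}^{k-1}(1-axq^j+a^2q^{2j})$, and for generic parameters $R_k^l(a,b,c,d;N;q)$ are the unique coefficients with $h_k(x;a)h_{N-k}(x;b)=\sum_{l=0}^N R_k^l(a,b,c,d;N;q)h_l(x;c)h_{N-l}(x;d)$. *)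

(* Defs.v *)
From HB Require Import structures.
From mathcomp Require Import all_boot all_order all_algebra all_fingroup.
From Stdlib Require Import ClassicalEpsilon.
Set Implicit Arguments. Unset Strict Implicit. Unset Printing Implicit Defensive.
Import GRing.Theory.
Local Open Scope ring_scope.

Definition hpoly (K : fieldType) (q a : K) (k : nat) : {poly K} :=
  \prod_(j < k) ((1 + a ^+ 2 * q ^+ (2 * j))%:P - (a * q ^+ j) *: 'X).

Definition hbasis (K : fieldType) (q c d : K) (N l : nat) : {poly K} :=
  hpoly q c l * hpoly q d (N - l).

(* genericity of (c,d,N): the family (h_l(x;c) h_{N-l}(x;d))_{0<=l<=N} is
   linearly independent (hence a basis of polynomials of degree <= N),
   so that the coefficients R_k^l are uniquely determined. *)
Definition basis_generic (K : fieldType) (q c d : K) (N : nat) : Prop :=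
  forall r : nat -> K,
    \sum_(l < N.+1) r l *: hbasis q c d N l = 0 -> forall l, (l <= N)%N -> r l = 0.

(* the coefficient vector l |-> R_k^l(a,b,c,d;N;q): some r with
   h_k(x;a) h_{N-k}(x;b) = sum_{l=0}^N r_l h_l(x;c) h_{N-l}(x;d)
   (unique for l <= N under basis_generic). *)
Definition Rvec (K : fieldType) (a b c d : K) (N : nat) (q : K) (k : nat) : nat -> K :=
  epsilon (inhabits (fun _ => 0))
    (fun r : nat -> K =>
       hpoly q a k * hpoly q b (N - k) = \sum_(l < N.+1) r l *: hbasis q c d N l).

Definition R (K : fieldType) (k l : nat) (a b c d : K) (N : nat) (q : K) : K :=
  Rvec a b c d N q k l.

Definition psum (n : nat) (s : 'S_n) (v : 'I_n -> nat) (i : 'I_n) : nat :=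
  (\sum_(j < n | (s j < s i)%N) v j)%N.

(* Main.v *)
Require Import Defs.
From HB Require Import structures.
From mathcomp Require Import all_boot all_order all_algebra all_fingroup.
From Stdlib Require Import ClassicalEpsilon.
Import GRing.Theory.
Local Open Scope ring_scope.

Lemma hpoly0 (K : fieldType) (q a : K) : hpoly q a 0 = 1.
Proof. by rewrite /hpoly big_ord0. Qed.

Lemma hpoly_add (K : fieldType) (q a : K) (x y : nat) :
  hpoly q a (x + y) = hpoly q a x * hpoly q (a * q ^+ x) y.
Proof.
rewrite /hpoly big_split_ord /=; congr (_ * _); apply: eq_bigr => j _ /=.
have -> : (a * q ^+ x) ^+ 2 * q ^+ (2 * j) = a ^+ 2 * q ^+ (2 * (x + j)).
  by rewrite exprMn -exprM -mulrA -exprD mulnDr (mulnC x 2%N).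
by rewrite -mulrA -exprD.
Qed.

Lemma hpoly_perm (K : fieldType) (q a : K) n (s : 'S_n) (v : 'I_n -> nat) :
  hpoly q a (\sum_(i < n) v i)%N = \prod_(i < n) hpoly q (a * q ^+ psum s v i) (v i).
Proof.
suff H : forall t, (t <= n)%N ->
  hpoly q a (\sum_(i < n | (s i < t)%N) v i)%N =
  \prod_(i < n | (s i < t)%N) hpoly q (a * q ^+ psum s v i) (v i).
  have := H n (leqnn n).
  have E : forall i : 'I_n, (s i < n)%N = true by move=> i; apply: ltn_ord.
  by rewrite (eq_bigl _ _ E) (eq_bigl _ _ E).
elim=> [|t IH] ht.
  rewrite big_pred0 // big_pred0 // hpoly0 //.
set j := (s^-1)%g (Ordinal ht).
have sj : s j = Ordinal ht by rewrite /j permKV.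
have hj : (s j < t.+1)%N by rewrite sj.
have eqc : forall i, ((s i < t.+1)%N && (i != j)) = (s i < t)%N.
  move=> i; rewrite ltnS leq_eqVlt; case: eqP => [e|ne] /=.
    have -> : i = j by apply: (@perm_inj _ s); apply: val_inj; rewrite sj /= e.
    by rewrite eqxx sj /= ltnn.
  case: ltnP => //= h; apply/eqP => ij; move: h; rewrite ij sj /= ltnn.
  done.
rewrite (bigD1 j hj) (bigD1 j hj) /= (eq_bigl _ _ eqc) (eq_bigl _ _ eqc).
rewrite addnC hpoly_add -IH 1?ltnW // mulrC; congr (_ * _).
by rewrite /psum sj.
Qed.

Lemma size_hpoly (K : fieldType) (q a : K) k : (size (hpoly q a k) <= k.+1)%N.
Proof.
elim: k => [|k IH]; first by rewrite hpoly0 size_poly1.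
rewrite /hpoly big_ord_recr /= -/(hpoly q a k).
apply: (leq_trans (size_polyMleq _ _)).
have h2 : (size (((1 + a ^+ 2 * q ^+ (2 * k))%:P - (a * q ^+ k) *: 'X)%R : {poly K}) <= 2)%N.
  apply: (leq_trans (size_polyD _ _)); rewrite geq_max size_polyN.
  rewrite (leq_trans (size_polyC_leq1 _)) //=.
  by rewrite (leq_trans (size_scale_leq _ _)) // size_polyX.
have := leq_add IH h2; rewrite addnS addn1 /= => H.
by rewrite -subn1 leq_subLR add1n.
Qed.

Lemma size_hbasis (K : fieldType) (q c d : K) N l : (l <= N)%N ->
  (size (hbasis q c d N l) <= N.+1)%N.
Proof.
move=> hl; rewrite /hbasis; apply: (leq_trans (size_polyMleq _ _)).
have := leq_add (size_hpoly _ q c l) (size_hpoly _ q d (N - l)).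
rewrite addSn addnS subnKC // => H.
by rewrite -subn1 leq_subLR add1n.
Qed.

Lemma span_exists (K : fieldType) (q c d : K) N (Hg : basis_generic q c d N)
  (p : {poly K}) : (size p <= N.+1)%N ->
  exists r : nat -> K, p = \sum_(l < N.+1) r l *: hbasis q c d N l.
Proof.
move=> hp.
pose A : 'M[K]_(N.+1) := \matrix_(l, j) (hbasis q c d N l)`_j.
have coefA : forall (u : 'rV_(N.+1)) (j : nat), (j < N.+1)%N ->
    (\sum_(l < N.+1) u 0 l *: hbasis q c d N l)`_j = (u *m A) 0 (inord j).
  move=> u j hj; rewrite coef_sum !mxE; apply: eq_bigr => l _.
  by rewrite coefZ mxE inordK.
have coefB : forall (u : 'rV_(N.+1)) (j : nat), (N.+1 <= j)%N ->
    (\sum_(l < N.+1) u 0 l *: hbasis q c d N l)`_j = 0.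
  move=> u j hj; rewrite coef_sum big1 // => l _.
  rewrite coefZ nth_default ?mulr0 //.
  by apply: leq_trans hj; apply: size_hbasis; rewrite -ltnS.
have Hinj : forall u : 'rV_(N.+1), u *m A = 0 -> u = 0.
  move=> u Hu; apply/rowP => l; rewrite mxE.
  have := Hg (fun l => if (l < N.+1)%N then u 0 (inord l) else 0).
  rewrite (eq_bigr (fun l : 'I_N.+1 => u 0 l *: hbasis q c d N l)); last first.
    by move=> i _; rewrite ltn_ord inord_val.
  move=> /(_ _ l (leq_ord l)); rewrite ltn_ord inord_val; apply.
  apply/polyP => j; rewrite coef0.
  case: (ltnP j N.+1) => hj; last by rewrite coefB.
  by rewrite coefA // Hu mxE.
have uA : A \in unitmx.
  rewrite -row_free_unit -kermx_eq0; apply/eqP/row_matrixP => i.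
  by rewrite row0; apply: Hinj; rewrite -row_mul mulmx_ker row0.
pose v : 'rV_(N.+1) := \row_j p`_j.
exists (fun l => if (l < N.+1)%N then (v *m invmx A) 0 (inord l) else 0).
rewrite (eq_bigr (fun l : 'I_N.+1 => (v *m invmx A) 0 l *: hbasis q c d N l)); last first.
  by move=> i _; rewrite ltn_ord inord_val.
apply/polyP => j.
case: (ltnP j N.+1) => hj; last by rewrite coefB // nth_default // (leq_trans hp).
by rewrite coefA // mulmxKV // mxE inordK.
Qed.

Lemma R_spec (K : fieldType) (q a b c d : K) N k (Hg : basis_generic q c d N) :
  (k <= N)%N ->
  hpoly q a k * hpoly q b (N - k) = \sum_(l < N.+1) R k l a b c d N q *: hbasis q c d N l.
Proof.
move=> hk; rewrite /R /Rvec.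
pose P := fun r : nat -> K => hpoly q a k * hpoly q b (N - k) = \sum_(l < N.+1) r l *: hbasis q c d N l.
change (P (epsilon (inhabits (fun _ => 0)) P)); apply: epsilon_spec.
apply: span_exists => //; apply: (leq_trans (size_polyMleq _ _)).
have := leq_add (size_hpoly _ q a k) (size_hpoly _ q b (N - k)).
rewrite addSn addnS subnKC // => H.
by rewrite -subn1 leq_subLR add1n.
Qed.

Lemma R_unique (K : fieldType) (q c d : K) N (Hg : basis_generic q c d N) (r r' : nat -> K) :
  \sum_(l < N.+1) r l *: hbasis q c d N l = \sum_(l < N.+1) r' l *: hbasis q c d N l ->
  forall l, (l <= N)%N -> r l = r' l.
Proof.
move=> H l hl; apply/eqP; rewrite -subr_eq0; apply/eqP.
apply: (Hg (fun l => r l - r' l)) => //.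
rewrite (eq_bigr (fun l : 'I_N.+1 => r l *: hbasis q c d N l - r' l *: hbasis q c d N l)).
  by rewrite sumrB H subrr.
by move=> i _; rewrite scalerBl.
Qed.

Definition joinf n B (g : {ffun 'I_n -> 'I_B}) (x : 'I_B) : {ffun 'I_n.+1 -> 'I_B} :=
  [ffun i => if unlift ord_max i is Some j then g j else x].
Arguments joinf {n B}.

Lemma joinf_w n B g x (j : 'I_n) : @joinf n B g x (widen_ord (leqnSn n) j) = g j.
Proof.
have -> : widen_ord (leqnSn n) j = lift ord_max j by apply: val_inj; exact: (esym (lift_max j)).
by rewrite ffunE liftK.
Qed.

Lemma joinf_m n B g x : @joinf n B g x ord_max = x.
Proof. by rewrite ffunE unlift_none. Qed.

Lemma joinf_bij n B : bijective (fun p : {ffun 'I_n -> 'I_B} * 'I_B => joinf p.1 p.2).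
Proof.
exists (fun m : {ffun 'I_n.+1 -> 'I_B} => ([ffun j => m (widen_ord (leqnSn n) j)], m ord_max)).
  by case=> g x /=; congr (_, _); [apply/ffunP => j; rewrite ffunE joinf_w | rewrite joinf_m].
move=> m; apply/ffunP => i; rewrite ffunE /=.
case: unliftP => [j ->|->]; last by [].
have -> : lift ord_max j = widen_ord (leqnSn n) j by apply: val_inj; exact: (lift_max j).
by rewrite ffunE.
Qed.

Lemma pre_join n B g x (i : nat) (hi : (i <= n)%N) (F : nat -> 'I_B -> nat) :
  (\sum_(j < n.+1 | (j < i)%N) F j (@joinf n B g x j) = \sum_(j < n | (j < i)%N) F j (g j))%N.
Proof.
rewrite big_mkcond big_ord_recr /= ltnNge hi /= addn0 [RHS]big_mkcond.
by apply: eq_bigr => j _; rewrite joinf_w.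
Qed.

Lemma cond_join n B g x (M : nat -> nat) :
  [forall i : 'I_n.+1, (@joinf n B g x i <= M i)%N] =
  [forall i : 'I_n, (g i <= M i)%N] && (x < (M n).+1)%N.
Proof.
apply/idP/idP.
  move/forallP => H; apply/andP; split.
    by apply/forallP => j; have := H (widen_ord (leqnSn n) j); rewrite joinf_w.
  by have := H ord_max; rewrite joinf_m.
case/andP => /forallP H hx; apply/forallP => i.
case: (unliftP ord_max i) => [j ->|->]; last by rewrite joinf_m.
have -> : lift ord_max j = widen_ord (leqnSn n) j by apply: val_inj; exact: (lift_max j).
by rewrite joinf_w /=.
Qed.

Lemma sum_join (K : fieldType) n B (M : nat -> nat) (G : {ffun 'I_n.+1 -> 'I_B} -> {poly K}) :
  \sum_(m : {ffun 'I_n.+1 -> 'I_B} | [forall i, (m i <= M i)%N]) G m =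
  \sum_(g : {ffun 'I_n -> 'I_B} | [forall i : 'I_n, (g i <= M i)%N])
     \sum_(x : 'I_B | (x < (M n).+1)%N) G (joinf g x).
Proof.
rewrite (reindex (fun p : {ffun 'I_n -> 'I_B} * 'I_B => joinf p.1 p.2)) /=; last first.
  by apply: onW_bij; apply: joinf_bij.
rewrite (eq_bigl (fun p : {ffun 'I_n -> 'I_B} * 'I_B => [forall i : 'I_n, (p.1 i <= M i)%N] && (p.2 < (M n).+1)%N)); last first.
  by move=> p; rewrite cond_join.
by rewrite (pair_big_dep (fun g : {ffun 'I_n -> 'I_B} => [forall i : 'I_n, (g i <= M i)%N])
                       (fun _ (x : 'I_B) => (x < (M n).+1)%N) (fun g x => G (joinf g x))).
Qed.

Lemma expand (K : fieldType) (q c d : K) (B n : nat) (M : nat -> nat)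
  (HM : forall i, (i < n)%N -> (M i < B)%N) (f : nat -> nat -> nat -> nat -> K)
  (P : nat -> {poly K})
  (HP : forall i s t, (i < n)%N -> P i = \sum_(x < (M i).+1)
        f i s t x *: (hpoly q (c * q ^+ s) x * hpoly q (d * q ^+ t) (M i - x))) :
  \prod_(i < n) P i =
  \sum_(m : {ffun 'I_n -> 'I_B} | [forall i, (m i <= M i)%N])
    (\prod_(i < n) f i (\sum_(j < n | (j < i)%N) (m j : nat))%N
                      (\sum_(j < n | (j < i)%N) (M j - m j))%N (m i)) *:
    (hpoly q c (\sum_(i < n) (m i : nat))%N * hpoly q d (\sum_(i < n) (M i - m i))%N).
Proof.
elim: n HM HP => [|n IH] HM HP.
  have e0 : #|'I_0| = 0 by rewrite card_ord.
  rewrite big_ord0 (big_pred1 (ffun0 e0)) ?big_ord0 ?hpoly0 ?scale1r ?mulr1 //.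
  move=> m /=; have -> : m == ffun0 e0 by apply/eqP/ffunP => -[].
  by apply/forallP => -[].
rewrite big_ord_recr /= IH; last 2 first.
- by move=> i hi; apply: HM; apply: ltnW.
- by move=> i s t hi; apply: HP; apply: ltnW.
rewrite mulr_suml sum_join.
apply: eq_bigr => g Hg.
rewrite (HP n (\sum_(i < n) (g i : nat))%N (\sum_(i < n) (M i - g i))%N) // mulr_sumr.
rewrite (big_ord_narrow (HM n (ltnSn n))).
apply: eq_bigr => x _.
set y := widen_ord _ x.
rewrite big_ord_recr /= joinf_m.
rewrite (pre_join _ _ _ _ _ _ (fun _ v => (v : nat))) // (pre_join _ _ _ _ _ _ (fun j (v : 'I_B) => M j - v)%N) //.
rewrite [in RHS](eq_bigr (fun i : 'I_n => f i (\sum_(j < n | (j < i)%N) (g j : nat))%N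
        (\sum_(j < n | (j < i)%N) (M j - g j))%N (g i))); last first.
  move=> i _; have hi : (i <= n)%N := ltnW (ltn_ord i).
  by rewrite (pre_join _ _ _ _ _ _ (fun _ v => (v : nat))) // (pre_join _ _ _ _ _ _ (fun j (v : 'I_B) => M j - v)%N) // joinf_w.
have E : forall j : 'I_n, (j < n)%N = true := fun j => ltn_ord j.
rewrite !(eq_bigl _ _ E).
rewrite !big_ord_recr /= !joinf_m.
have S1 : (\sum_(i < n) joinf g y (widen_ord (leqnSn n) i) = \sum_(i < n) g i)%N.
  by apply: eq_bigr => i _; rewrite joinf_w.
have S2 : (\sum_(i < n) (M i - joinf g y (widen_ord (leqnSn n) i)) = \sum_(i < n) (M i - g i))%N.
  by apply: eq_bigr => i _; rewrite joinf_w.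
rewrite S1 S2.
rewrite !hpoly_add -scalerAl -scalerAr scalerA; congr (_ *: _).
by rewrite mulrACA.
Qed.

Theorem mainTheorem9 (K : fieldType) (n : nat) (Hn : (1 <= n)%N)
  (M : 'I_n -> nat) (sigma tau : 'S_n) (a b c d q : K)
  (Hgen : forall (s t N : nat), basis_generic q (c * q ^+ s) (d * q ^+ t) N)
  (k : 'I_n -> nat) (Hk : forall i, (k i <= M i)%N)
  (l : nat) (Hl : (l <= \sum_(i < n) M i)%N) :
  R (\sum_(i < n) k i)%N l a b c d (\sum_(i < n) M i)%N q =
  \sum_(m : {ffun 'I_n -> 'I_(\sum_(i < n) M i).+1}
          | [forall i, (m i <= M i)%N] && ((\sum_(i < n) (m i : nat))%N == l))
    \prod_(i < n)
      R (k i) (m i) (a * q ^+ psum sigma k i)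
        (b * q ^+ psum tau (fun j => M j - k j)%N i)
        (c * q ^+ psum 1%g (fun j => (m j : nat)) i)
        (d * q ^+ psum 1%g (fun j => M j - m j)%N i) (M i) q.
Proof.
move: M sigma tau k Hk Hl; case: n Hn => [//|n] _ M sigma tau k Hk Hl.
set N := (\sum_(i < n.+1) M i)%N.
pose M' := fun i : nat => M (inord i).
pose k' := fun i : nat => k (inord i).
pose a' := fun i : nat => a * q ^+ psum sigma k (inord i).
pose b' := fun i : nat => b * q ^+ psum tau (fun j => M j - k j)%N (inord i).
pose f := fun i s t x => R (k' i) x (a' i) (b' i) (c * q ^+ s) (d * q ^+ t) (M' i) q.
pose P := fun i => hpoly q (a' i) (k' i) * hpoly q (b' i) (M' i - k' i).
have HM : forall i, (i < n.+1)%N -> (M' i < N.+1)%N.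
  by move=> i hi; rewrite ltnS /M' /N (bigD1 (inord i)) //= leq_addr.
have HP : forall i s t, (i < n.+1)%N -> P i = \sum_(x < (M' i).+1)
        f i s t x *: (hpoly q (c * q ^+ s) x * hpoly q (d * q ^+ t) (M' i - x)).
  move=> i s t hi; rewrite /P (R_spec _ _ _ _ _ _ _ _ (Hgen s t (M' i))) //.
  exact: Hk.
have EX := expand K q c d N.+1 n.+1 M' HM f P HP.
set KK := (\sum_(i < n.+1) k i)%N.
have hKK : (KK <= N)%N by apply: leq_sum => i _.
have NK : (N - KK = \sum_(i < n.+1) (M i - k i))%N.
  by rewrite sumnB // => i _.
have LHS : hpoly q a KK * hpoly q b (N - KK) = \prod_(i < n.+1) P i.
  rewrite NK /KK (hpoly_perm _ q a _ sigma) (hpoly_perm _ q b _ tau) -big_split /=.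
  by apply: eq_bigr => i _; rewrite /P /a' /b' /k' /M' !inord_val.
pose coef := fun m : {ffun 'I_n.+1 -> 'I_N.+1} =>
  \prod_(i < n.+1) f i (\sum_(j < n.+1 | (j < i)%N) (m j : nat))%N
                      (\sum_(j < n.+1 | (j < i)%N) (M' j - m j))%N (m i).
pose C' := fun m : {ffun 'I_n.+1 -> 'I_N.+1} => [forall i, (m i <= M' i)%N].
pose r := fun l : nat => \sum_(m | C' m && ((\sum_(i < n.+1) (m i : nat))%N == l)) coef m.
have Hg0 := Hgen 0%N 0%N N; rewrite !expr0 !mulr1 in Hg0.
have EQ : \sum_(l < N.+1) R KK l a b c d N q *: hbasis q c d N l =
          \sum_(l < N.+1) r l *: hbasis q c d N l.
  rewrite -(R_spec _ q a b c d N KK Hg0 hKK) LHS EX.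
  rewrite (partition_big (fun m : {ffun 'I_n.+1 -> 'I_N.+1} =>
              (inord (\sum_(i < n.+1) (m i : nat)) : 'I_N.+1)) xpredT) //.
  apply: eq_bigr => l' _; rewrite /r scaler_suml.
  have SN : (\sum_(i < n.+1) M' i = N)%N.
    by apply: eq_bigr => i _; rewrite /M' inord_val.
  apply: eq_big => m.
    rewrite /C'; case: (boolP [forall i, _]) => //= Cm.
    have hS : (\sum_(i < n.+1) (m i : nat) <= N)%N.
      rewrite -[X in (_ <= X)%N]SN; apply: leq_sum => i _; exact: (forallP Cm i).
    by rewrite -(inj_eq val_inj) /= inordK // ltnS.
  move=> /andP [Cm /eqP El]; congr (_ *: _).
  rewrite /hbasis -El inordK; last first.
    rewrite ltnS -[X in (_ <= X)%N]SN; apply: leq_sum => i _; exact: (forallP Cm i).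
  rewrite sumnB ?SN // => i _; exact: (forallP Cm i).
have := R_unique _ q c d N Hg0 _ _ EQ l Hl.
move=> E; transitivity (r l); first exact: E.
rewrite /r.
have P1 : forall (v : 'I_n.+1 -> nat) i, psum 1%g v i = (\sum_(j < n.+1 | (j < i)%N) v j)%N.
  by move=> v i; rewrite /psum; apply: eq_bigl => j; rewrite !perm1.
apply: eq_big => m.
  congr (_ && _); apply: eq_forallb => i; by rewrite /M' inord_val.
move=> _; apply: eq_bigr => i _.
have S3 : (\sum_(j < n.+1 | (j < i)%N) (M' j - m j) = \sum_(j < n.+1 | (j < i)%N) (M j - m j))%N.
  by apply: eq_bigr => j _; rewrite /M' inord_val.
by rewrite /f S3 /k' /a' /b' /M' !inord_val !P1.
Qed.
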